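(* Let $G$ be a finite nilpotent group and $H$ an arbitrary finite group with $|G|=|H|$. Then $C(G)\cong C(H)$ if and only if $H$ is nilpotent and, for every prime $p$, $C(G_p)\cong C(H_p)$, where $G_p$ and $H_p$ denote the Sylow $p$-subgroups of $G$ and $H$, respectively.
   Context: All groups are finite. For a group $X$, let $\mathrm{Cyc}(X)=\{x\in X : \langle x,y\rangle \text{ is cyclic for all } y\in X\}$. The cyclic graph $C(X)$ is the simple graph with vertex set $X\setminus \mathrm{Cyc}(X)$ in which two distinct vertices $x,y$ are adjacent iff $\langle x,y\rangle$ is cyclic. *)

(* Defs.v *)
From mathcomp Require Import all_boot all_fingroup all_solvable.
Set Implicit Arguments. Unset Strict Implicit. Unset Printing Implicit Defensive.
Local Open Scope group_scope.

Definition Cyc (gT : finGroupType) (X : {set gT}) : {set gT} :=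
  [set x in X | [forall y in X, cyclic <<[set x; y]>>]].

Definition cyc_vertices (gT : finGroupType) (X : {set gT}) : {set gT} :=
  X :\: Cyc X.

Definition cyc_adj (gT : finGroupType) (X : {set gT}) (x y : gT) : bool :=
  [&& x \in cyc_vertices X, y \in cyc_vertices X, x != y &
      cyclic <<[set x; y]>>].

Definition cyc_graph_iso (gT hT : finGroupType) (X : {set gT}) (Y : {set hT})
  : Prop :=
  exists f : gT -> hT,
    [/\ {in cyc_vertices X &, injective f},
        f @: cyc_vertices X = cyc_vertices Y &
        {in cyc_vertices X &, forall x y, cyc_adj Y (f x) (f y) = cyc_adj X x y}].

(* Main.v *)
Require Import Defs.
From mathcomp Require Import all_boot all_fingroup all_solvable.
From Stdlib Require Import ClassicalEpsilon.
Set Implicit Arguments. Unset Strict Implicit. Unset Printing Implicit Defensive.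
Local Open Scope group_scope.

Section R.
Variable T : finGroupType.
Implicit Types a b c x y u v w : T.

Definition Rc a b := cyclic <<[set a; b]>>.

Lemma Rc_sym a b : Rc a b = Rc b a.
Proof. by rewrite /Rc setUC. Qed.

Lemma Rc_refl a : Rc a a.
Proof. by rewrite /Rc setUid cycle_cyclic. Qed.

Lemma Rc_cycle u w y : w \in <[u]> -> Rc u y -> Rc w y.
Proof.
move=> wu; apply: cyclicS; rewrite gen_subG; apply/subsetP => z.
rewrite !inE => /orP[/eqP->|/eqP->]; last by rewrite mem_gen // !inE eqxx orbT.
have: <[u]> \subset <<[set u; y]>> by rewrite cycle_subG mem_gen // !inE eqxx.
by move/subsetP; apply.
Qed.

Lemma Rc_1 y : Rc 1 y.
Proof. by apply: (@Rc_cycle y); [apply: group1 | rewrite Rc_refl]. Qed.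

Lemma Rc_comm a b : Rc a b -> commute a b.
Proof.
move/cyclic_abelian/centsP => cab.
by apply: cab; rewrite mem_gen // !inE eqxx ?orbT.
Qed.

Lemma not_prime_constt p x : ~~ prime p -> x.`_p = 1.
Proof.
move=> np; apply/constt1P; apply/pnatP => // q q_pr _.
by rewrite !inE; apply: contraNneq np => <-.
Qed.

Lemma Rc_core x y : commute x y -> (forall p, prime p -> Rc x.`_p y.`_p) -> Rc x y.
Proof.
move=> cxy Hp.
have defA : <<[set x; y]>> = <[x]> * <[y]>.
  by rewrite -cent_joinEl ?cents_cycle // joing_idl joing_idr.
apply: nil_Zgroup_cyclic.
  apply/forall_inP => V /SylowP [p p_pr sylV].
  apply: cyclicS (Hp p p_pr); apply/subsetP => u Vu.
  have pu: p.-elt u := mem_p_elt (pHall_pgroup sylV) Vu.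
  have := subsetP (pHall_sub sylV) u Vu; rewrite /= defA => Au.
  rewrite -(constt_p_elt pu); case/mulsgP: Au => a b Ha Hb ->.
  case/cycleP: Ha => i ->; case/cycleP: Hb => j ->.
  rewrite consttM; last exact: commuteX2.
  rewrite !consttX; apply: groupM; apply: groupX; apply: mem_gen;
    by rewrite !inE eqxx ?orbT.
apply: abelian_nil; rewrite /= abelian_gen; apply/centsP => a.
rewrite !inE => /orP[]/eqP-> b; rewrite !inE => /orP[]/eqP-> //.
Qed.

Lemma Rc_cycle2 u v u' v' : u' \in <[u]> -> v' \in <[v]> -> Rc u v -> Rc u' v'.
Proof.
move=> uu vv /(Rc_cycle uu); rewrite Rc_sym => /(Rc_cycle vv); by rewrite Rc_sym.
Qed.

Lemma pelt_chain (p : nat) u v : p.-elt u -> p.-elt v -> Rc u v ->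
  (u \in <[v]>) || (v \in <[u]>).
Proof.
move=> pu pv Ruv.
have su : <[u]> \subset <<[set u; v]>> by rewrite cycle_subG mem_gen // !inE eqxx.
have sv : <[v]> \subset <<[set u; v]>> by rewrite cycle_subG mem_gen // !inE eqxx orbT.
have [i oi] := p_natP pu; have [j oj] := p_natP pv.
rewrite -[u \in _]cycle_subG -[v \in _]cycle_subG.
rewrite -(cardSg_cyclic Ruv su sv) -(cardSg_cyclic Ruv sv su) -!orderE oi oj.
case: (leqP i j) => ij.
  by rewrite dvdn_exp2l.
by rewrite orbC dvdn_exp2l // ltnW.
Qed.

Lemma Rc_mul a b c : Rc a b -> Rc a c -> Rc b c -> Rc (a * b) c.
Proof.
move=> Rab Rac Rbc; apply: Rc_core.
  by apply: commute_sym; apply: commuteM; apply: commute_sym; apply: Rc_comm.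
move=> p p_pr; rewrite consttM; last exact: Rc_comm.
have Rab' : Rc a.`_p b.`_p by apply: Rc_cycle2 Rab; apply: cycle_constt.
have Rac' : Rc a.`_p c.`_p by apply: Rc_cycle2 Rac; apply: cycle_constt.
have Rbc' : Rc b.`_p c.`_p by apply: Rc_cycle2 Rbc; apply: cycle_constt.
case/orP: (pelt_chain (p_elt_constt p a) (p_elt_constt p b) Rab') => H.
  by apply: Rc_cycle Rbc'; rewrite groupM // cycle_id.
by apply: Rc_cycle Rac'; rewrite groupM // cycle_id.
Qed.

Lemma nil_comm (G : {group T}) p a b : nilpotent G -> a \in G -> b \in G ->
  p.-elt a -> p^'.-elt b -> commute a b.
Proof.
move=> nilG aG bG pa pb.
have /dprodP[_ _ cpp' _] := nilpotent_pcoreC p nilG.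
have aO : a \in 'O_p(G).
  by rewrite (mem_normal_Hall (nilpotent_pcore_Hall p nilG) (pcore_normal _ _)).
have bO : b \in 'O_p^'(G).
  by rewrite (mem_normal_Hall (nilpotent_pcore_Hall p^' nilG) (pcore_normal _ _)).
by apply: commute_sym; apply: (centsP cpp').
Qed.

Lemma constt_in (G : {group T}) x pi : x \in G -> x.`_pi \in G.
Proof. by move=> xG; rewrite /constt groupX. Qed.

Lemma Rc_nil (G : {group T}) x y : nilpotent G -> x \in G -> y \in G ->
  Rc x y <-> (forall p, prime p -> Rc x.`_p y.`_p).
Proof.
move=> nilG xG yG; split.
  by move=> Rxy p _; apply: Rc_cycle2 Rxy; apply: cycle_constt.
move=> Hp; apply: Rc_core => //.
apply: commute_sym; rewrite -(prod_constt x); apply: commute_prod => p _.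
apply: commute_sym; rewrite -(prod_constt y); apply: commute_prod => q _.
have [p_pr|np] := boolP (prime p); last first.
  rewrite (not_prime_constt x np); apply: commute_sym; exact: commute1.
have [q_pr|nq] := boolP (prime q); last by rewrite (not_prime_constt y nq); exact: commute1.
have [qp|pq] := eqVneq q p; first by rewrite qp; exact: Rc_comm (Hp _ p_pr).
apply: (nil_comm (p := p) nilG); rewrite ?constt_in ?p_elt_constt //.
apply: sub_in_pnat (p_elt_constt q y) => r _; rewrite !inE => /eqP ->.
by [].
Qed.

End R.

Section D.
Variable T : finGroupType.
Variable X : {group T}.
Implicit Types a b c x y u v w : T.

Definition Nb x := [set y in X | Rc x y].
Definition Db x := [set w in X | Nb x \subset Nb w].

Lemma Nb_refl x : x \in X -> x \in Nb x.
Proof. by move=> xX; rewrite inE xX Rc_refl. Qed.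

Lemma Nb_sub x : Nb x \subset X.
Proof. by apply/subsetP => y; rewrite inE => /andP[]. Qed.

Lemma Db_id x : x \in X -> x \in Db x.
Proof. by move=> xX; rewrite inE xX subxx. Qed.

Lemma Db_sub_X x : Db x \subset X.
Proof. by apply/subsetP => w; rewrite inE => /andP[]. Qed.

Lemma Db_cycle x w : x \in X -> w \in <[x]> -> w \in Db x.
Proof.
move=> xX wx; have sxX : <[x]> \subset X by rewrite cycle_subG.
rewrite inE (subsetP sxX _ wx) /=.
apply/subsetP => y; rewrite !inE => /andP[-> Rxy] /=.
exact: Rc_cycle Rxy.
Qed.

Lemma Db_Rc x w : x \in X -> w \in Db x -> Rc x w.
Proof.
move=> xX; rewrite inE => /andP[_ /subsetP/(_ x (Nb_refl xX))].
by rewrite inE Rc_sym => /andP[].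
Qed.

Lemma Db_pair x w1 w2 : x \in X -> w1 \in Db x -> w2 \in Db x -> Rc w1 w2.
Proof.
move=> xX w1D w2D; have := Db_Rc xX w2D; move: w1D.
rewrite inE => /andP[_ /subsetP H] R2.
have: w2 \in Nb x by rewrite inE (subsetP (Db_sub_X x)) // R2.
by move/H; rewrite inE => /andP[].
Qed.

Lemma Db_group x : x \in X -> group_set (Db x).
Proof.
move=> xX; apply/group_setP; split.
  rewrite inE group1; apply/subsetP => y; rewrite !inE => /andP[-> _].
  exact: Rc_1.
move=> w1 w2 w1D w2D; have R12 := Db_pair xX w1D w2D.
rewrite inE groupM ?(subsetP (Db_sub_X x)) //=.
apply/subsetP => y yN.
move: w1D w2D; rewrite !inE => /andP[w1X /subsetP H1] /andP[w2X /subsetP H2].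
have := H1 y yN; have := H2 y yN; rewrite !inE => /andP[yX R2] /andP[_ R1].
by rewrite yX; apply: Rc_mul.
Qed.

Lemma Db_sub x u : x \in X -> u \in Db x -> Db u \subset Db x.
Proof.
move=> xX; rewrite inE => /andP[uX sxu]; apply/subsetP => v.
rewrite !inE => /andP[-> suv] /=; exact: subset_trans suv.
Qed.

Lemma pair_cyclic (K : {group T}) : {in K &, forall a b, Rc a b} -> cyclic K.
Proof.
move=> HK.
have [g gK gmax] : exists2 g, g \in K & forall h, h \in K -> #[h] <= #[g].
  by case: (@arg_maxnP _ 1 (mem K) (fun g => #[g]) (group1 K)) => g gK gm; exists g.
apply/cyclicP; exists g; apply/eqP; rewrite eqEsubset cycle_subG gK andbT.
apply/subsetP => u uK.
have /cyclicP[h defh] := HK u g uK gK.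
have sK : <<[set u; g]>> \subset K.
  by rewrite gen_subG; apply/subsetP => z; rewrite !inE => /orP[]/eqP->.
have hK : h \in K by rewrite -cycle_subG -defh.
have sgh : <[g]> \subset <[h]> by rewrite -defh cycle_subG mem_gen // !inE eqxx orbT.
have egh : <[g]> = <[h]>.
  apply/eqP; rewrite eqEcard sgh /= -!orderE.
  by apply: gmax.
by rewrite egh -defh mem_gen // !inE eqxx.
Qed.

Lemma Db_cyclic x (xX : x \in X) : cyclic (Group (Db_group xX)).
Proof.
by apply: pair_cyclic => a b aD bD; apply: (Db_pair xX).
Qed.

Definition ordset (A : {set T}) d := [set u in A | #[u] == d].
Definition cnt x d := #|[set u in X | (Db u == Db x) && (#[u] == d)]|.
Definition cond x d := [forall v in Db x, (Db v != Db x) ==> ~~ (d %| #|Db v|)].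

Lemma DbX x w : w \in Db x -> w \in X.
Proof. exact: (subsetP (Db_sub_X x)). Qed.

Lemma cnt_eq x d : x \in X -> cnt x d = if cond x d then #|ordset (Db x) d| else 0.
Proof.
move=> xX; rewrite /cnt; case: ifP => C.
  apply: eq_card => u; rewrite /ordset [in LHS]in_set [in RHS]in_set.
  apply/idP/idP.
    by case/and3P => uX /eqP <- ->; rewrite Db_id.
  case/andP => uD ou; rewrite ou (DbX uD) andbT /=.
  have uX := DbX uD.
  apply: contraT => neq.
  have /implyP/(_ neq)/negP H := forall_inP C u uD; case: H.
  rewrite -(eqP ou) orderE.
  have sub : <[u]> \subset Db u by apply/subsetP => z zu; exact: Db_cycle uX zu.
  exact: (@cardSg _ (Group (Db_group uX)) <[u]>%G sub).
apply/eqP; rewrite cards_eq0; apply/eqP/setP => u; rewrite in_set0 in_set.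
apply/negP => /and3P[uX /eqP Dux /eqP ou].
move: C => /negbT/negP; apply; apply/forall_inP => v vD; apply/implyP => nv.
apply/negP => dv; move/negP: nv; apply; apply/eqP.
have vX := DbX vD.
have sub1 : <[u]> \subset Db v.
  have := cardSg_cyclic (Db_cyclic xX) (H := <[u]>%G) (K := Group (Db_group vX)).
  rewrite /= => <-.
  - by rewrite -orderE ou.
  - by rewrite -Dux; apply/subsetP => z; exact: Db_cycle uX.
  - exact: (Db_sub xX vD).
apply/eqP; rewrite eqEsubset Db_sub //= -Dux.
by apply: (Db_sub vX); apply: (subsetP sub1); apply: cycle_id.
Qed.

Lemma Rc_twin u u' y : u \in X -> u' \in X -> Db u = Db u' -> y \in X ->
  Rc u y = Rc u' y.
Proof.
move=> uX u'X Duu' yX.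
have := Db_id u'X; rewrite -Duu' inE => /andP[_ /subsetP H1].
have := Db_id uX; rewrite Duu' inE => /andP[_ /subsetP H2].
apply/idP/idP => R.
  by have := H1 y; rewrite !inE yX R => /(_ isT).
by have := H2 y; rewrite !inE yX R => /(_ isT).
Qed.

End D.

Lemma cyc_count (gT hT : finGroupType) (G : {group gT}) (M : {group hT}) d :
  cyclic G -> cyclic M -> #|G| = #|M| ->
  #|[set u in G | #[u] == d]| = #|[set w in M | #[w] == d]|.
Proof.
move=> cG cM eGM.
have: G \isog M by rewrite isog_cyclic_card // cM eGM eqxx.
case/isogP => f injf fG.
have -> : [set w in M | #[w] == d] = f @: [set u in G | #[u] == d].
  apply/setP => w; rewrite inE; apply/idP/imsetP.
    case/andP; rewrite -fG morphimEdom => /imsetP[u uG ->] ou.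
    by exists u => //; rewrite inE uG -(order_injm injf uG).
  case=> u; rewrite inE => /andP[uG ou] ->.
  by rewrite (order_injm injf uG) ou -fG morphimEdom imset_f.
rewrite card_in_imset //; apply: sub_in2 (injmP injf).
by move=> u; rewrite inE => /andP[].
Qed.

Section Iso.
Variables (gT hT : finGroupType) (X : {group gT}) (Y : {group hT}) (f : gT -> hT).

Definition Riso := [/\ {in X &, injective f}, f @: X = Y &
  {in X &, forall a b, Rc (f a) (f b) = Rc a b}].

Hypothesis Hf : Riso.

Lemma Riso_inj : {in X &, injective f}. Proof. by case: Hf. Qed.
Lemma Riso_im : f @: X = Y. Proof. by case: Hf. Qed.
Lemma Riso_Rc : {in X &, forall a b, Rc (f a) (f b) = Rc a b}. Proof. by case: Hf. Qed.

Lemma Riso_in x : x \in X -> f x \in Y.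
Proof. by move=> xX; rewrite -Riso_im imset_f. Qed.

Lemma imS_inj (A B : {set gT}) : A \subset X -> B \subset X ->
  (f @: A \subset f @: B) = (A \subset B).
Proof.
move=> sAX sBX; apply/idP/idP; last exact: imsetS.
move=> sfAB; apply/subsetP => a aA.
have /imsetP[b bB eab] := subsetP sfAB (f a) (imset_f f aA).
by rewrite (Riso_inj (subsetP sAX a aA) (subsetP sBX b bB) eab).
Qed.

Lemma imS_eq (A B : {set gT}) : A \subset X -> B \subset X ->
  (f @: A == f @: B) = (A == B).
Proof. by move=> sAX sBX; rewrite !eqEsubset !imS_inj. Qed.


Lemma Nb_im x : x \in X -> Nb Y (f x) = f @: Nb X x.
Proof.
move=> xX; apply/setP => w; apply/idP/idP.
  rewrite inE => /andP[]; rewrite -Riso_im => /imsetP[v vX ->].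
  by rewrite Riso_Rc // => R; rewrite imset_f // inE vX.
case/imsetP => v; rewrite inE => /andP[vX R] ->.
by rewrite inE Riso_in // Riso_Rc.
Qed.

Lemma Db_im x : x \in X -> Db Y (f x) = f @: Db X x.
Proof.
move=> xX; apply/setP => w; apply/idP/idP.
  rewrite inE => /andP[]; rewrite -Riso_im => /imsetP[v vX ->].
  rewrite !Nb_im // imS_inj ?Nb_sub // => s.
  by rewrite imset_f // inE vX.
case/imsetP => v; rewrite inE => /andP[vX s] ->.
by rewrite inE Riso_in // !Nb_im // imS_inj ?Nb_sub.
Qed.

Lemma card_Db_im x : x \in X -> #|Db Y (f x)| = #|Db X x|.
Proof.
move=> xX; rewrite Db_im // card_in_imset //.
apply: sub_in2 Riso_inj; exact: (subsetP (Db_sub_X X x)).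
Qed.

Lemma Db_eq_im u x : u \in X -> x \in X ->
  (Db Y (f u) == Db Y (f x)) = (Db X u == Db X x).
Proof. by move=> uX xX; rewrite !Db_im // imS_eq // Db_sub_X. Qed.

Lemma cond_im x d : x \in X -> cond Y (f x) d = cond X x d.
Proof.
move=> xX; apply/forall_inP/forall_inP => H v vD.
  have vX := DbX vD.
  have := H (f v); rewrite Db_im // imset_f // => /(_ isT).
  by rewrite -(Db_im xX) (Db_eq_im vX xX) (card_Db_im vX).
have: v \in f @: Db X x by rewrite -(Db_im xX).
case/imsetP => u uD ->.
have uX := DbX uD.
by rewrite Db_eq_im // card_Db_im //; apply: H.
Qed.

Lemma cnt_im x d : x \in X -> cnt Y (f x) d = cnt X x d.
Proof.
move=> xX; rewrite !cnt_eq ?Riso_in // cond_im //; case: ifP => // _.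
have := cyc_count d (Db_cyclic (Riso_in xX)) (Db_cyclic xX).
by rewrite /= card_Db_im // /ordset => ->.
Qed.

End Iso.

Lemma match_fib (aT bT : finType) (C : eqType) (b0 : bT) (f : aT -> C) (g : bT -> C) :
  forall (A : {set aT}) (B : {set bT}),
  (forall c, #|[set a in A | f a == c]| = #|[set b in B | g b == c]|) ->
  exists psi : aT -> bT, [/\ {in A &, injective psi}, psi @: A = B &
                             {in A, forall a, g (psi a) = f a}].
Proof.
move=> A; move Hn: #|A| => n; elim: n A Hn => [|n IH] A Hn B Hfib.
  have A0 : A = set0 by apply/eqP; rewrite -cards_eq0 Hn.
  have B0 : B = set0.
    apply/eqP; rewrite -subset0; apply/subsetP => b bB.
    have := Hfib (g b); rewrite A0.
    have -> : [set a in set0 | f a == g b] = set0 by apply/setP => a; rewrite !inE.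
    rewrite cards0 => /esym/eqP; rewrite cards_eq0 => /eqP/setP/(_ b).
    by rewrite !inE bB eqxx.
  exists (fun _ => b0); split; first by move=> x y; rewrite A0 inE.
    by rewrite A0 B0 imset0.
  by move=> x; rewrite A0 inE.
have : 0 < #|A| by rewrite Hn.
rewrite card_gt0 => /set0Pn[a aA].
have : 0 < #|[set b in B | g b == f a]|.
  by rewrite -Hfib card_gt0; apply/set0Pn; exists a; rewrite inE aA eqxx.
rewrite card_gt0 => /set0Pn[b]; rewrite inE => /andP[bB /eqP gb].
have [psi [inj im col]] : exists psi : aT -> bT, [/\ {in A :\ a &, injective psi},
    psi @: (A :\ a) = B :\ b & {in A :\ a, forall a, g (psi a) = f a}].
  apply: IH.
    by have := cardsD1 a A; rewrite aA Hn add1n => -[].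
  move=> c.
  have e1 : [set x in A :\ a | f x == c] = [set x in A | f x == c] :\ a.
    by apply/setP => x; rewrite !inE andbA.
  have e2 : [set x in B :\ b | g x == c] = [set x in B | g x == c] :\ b.
    by apply/setP => x; rewrite !inE andbA.
  have := cardsD1 a [set x in A | f x == c]; have := cardsD1 b [set x in B | g x == c].
  rewrite e1 e2 Hfib !inE aA bB gb /= => -> /eqP; rewrite eqn_add2l => /eqP.
  by [].
exists (fun x => if x == a then b else psi x); split.
- move=> x y xA yA /=.
  have Hx : x != a -> psi x \in B :\ b.
    by move=> xa; rewrite -im imset_f // !inE xa.
  have Hy : y != a -> psi y \in B :\ b.
    by move=> ya; rewrite -im imset_f // !inE ya.
  case: eqP => [->|/eqP xa]; case: eqP => [->|/eqP ya] //.
  + by move=> E; have := Hy ya; rewrite -E !inE eqxx.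
  + by move=> E; have := Hx xa; rewrite E !inE eqxx.
  + by apply: inj; rewrite !inE ?xa ?ya.
- rewrite -(setD1K aA) imsetU1 eqxx -(setD1K bB); congr (_ |: _).
  rewrite -im; apply: eq_in_imset => x; rewrite !inE => /andP[xa _].
  by rewrite (negbTE xa).
- move=> x xA /=; case: eqP => [->|/eqP xa]; first by rewrite gb.
  by apply: col; rewrite !inE xa.
Qed.

Section Conv.
Variables (gT hT : finGroupType) (X : {group gT}) (Y : {group hT}).

Lemma CycE (Z : {set gT}) x : (x \in Cyc Z) = (x \in Z) && [forall y in Z, Rc x y].
Proof. by rewrite inE. Qed.

Lemma CycE' (Z : {set hT}) x : (x \in Cyc Z) = (x \in Z) && [forall y in Z, Rc x y].
Proof. by rewrite inE. Qed.

Lemma VE (Z : {set gT}) x : (x \in cyc_vertices Z) = (x \notin Cyc Z) && (x \in Z).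
Proof. by rewrite /cyc_vertices inE. Qed.

Lemma VE' (Z : {set hT}) x : (x \in cyc_vertices Z) = (x \notin Cyc Z) && (x \in Z).
Proof. by rewrite /cyc_vertices inE. Qed.

Lemma Riso_Cyc f x : Riso X Y f -> x \in X -> (f x \in Cyc Y) = (x \in Cyc X).
Proof.
move=> Hf xX; rewrite CycE CycE' (Riso_in Hf xX) xX /=.
apply/forall_inP/forall_inP => H y yX.
  by rewrite -(Riso_Rc Hf xX yX); apply: H; apply: (Riso_in Hf yX).
have: y \in f @: X by rewrite (Riso_im Hf).
case/imsetP => z zX ->.
by rewrite (Riso_Rc Hf xX zX); apply: H.
Qed.

Lemma Riso_C f : Riso X Y f -> cyc_graph_iso X Y.
Proof.
move=> Hf; exists f; split.
- by apply: sub_in2 (Riso_inj Hf) => x; rewrite VE => /andP[].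
- apply/setP => w; apply/imsetP/idP.
    case=> x; rewrite VE => /andP[nx xX] ->.
    by rewrite VE' (Riso_Cyc Hf xX) nx (Riso_in Hf xX).
  rewrite VE' => /andP[nw]; rewrite -(Riso_im Hf) => /imsetP[x xX ex].
  by exists x => //; rewrite VE xX andbT -(Riso_Cyc Hf xX) -ex.
- move=> x y; rewrite !VE => /andP[nx xX] /andP[ny yX].
  rewrite /cyc_adj !VE !VE' !(Riso_Cyc Hf) ?(Riso_in Hf) // nx ny xX yX /=.
  rewrite (inj_in_eq (Riso_inj Hf)) //; congr (_ && _).
  exact: (Riso_Rc Hf).
Qed.

Lemma C_Riso : cyc_graph_iso X Y -> #|X| = #|Y| -> exists phi, Riso X Y phi.
Proof.
case=> f [inj im adj] eXY.
have sCX : Cyc X \subset X by apply/subsetP => x; rewrite CycE => /andP[].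
have sCY : Cyc Y \subset Y by apply/subsetP => x; rewrite CycE' => /andP[].
have cardC : #|Cyc X| = #|Cyc Y|.
  have := cardsID (Cyc X) X; have := cardsID (Cyc Y) Y.
  rewrite (setIidPr sCX) (setIidPr sCY) -eXY.
  have -> : #|Y :\: Cyc Y| = #|X :\: Cyc X|.
    by rewrite -[Y :\: _]/(cyc_vertices Y) -im card_in_imset.
  by move=> <- /eqP; rewrite eqn_add2r => /eqP.
have Hfib : forall c : unit, #|[set a in Cyc X | tt == c]| = #|[set b in Cyc Y | tt == c]|.
  move=> c; have ->: [set a in Cyc X | tt == c] = Cyc X.
    by apply/setP => z; rewrite in_set; case: c; rewrite eqxx andbT.
  have ->: [set a in Cyc Y | tt == c] = Cyc Y.
    by apply/setP => z; rewrite in_set; case: c; rewrite eqxx andbT.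
  exact: cardC.
have [h [hinj him _]] := match_fib 1 Hfib.
pose phi x := if x \in Cyc X then h x else f x.
have hC : forall x, x \in Cyc X -> h x \in Cyc Y.
  by move=> x xC; rewrite -him imset_f.
have fV : forall x, x \in X -> x \notin Cyc X -> f x \in cyc_vertices Y.
  by move=> x xX nx; rewrite -im imset_f // VE nx.
have fnC : forall x, x \in X -> x \notin Cyc X -> f x \notin Cyc Y.
  by move=> x xX nx; have := fV x xX nx; rewrite VE' => /andP[].
have fY : forall x, x \in X -> x \notin Cyc X -> f x \in Y.
  by move=> x xX nx; have := fV x xX nx; rewrite VE' => /andP[].
have phiY : forall x, x \in X -> phi x \in Y.
  move=> x xX; rewrite /phi; case: ifP => [xC|/negbT nx]; last exact: fY.
  exact: (subsetP sCY _ (hC x xC)).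
exists phi; split.
- move=> x y xX yX; rewrite /phi.
  case: ifP => [xC|/negbT nx]; case: ifP => [yC|/negbT ny].
  + exact: hinj.
  + by move=> E; have := fnC y yX ny; rewrite -E hC.
  + by move=> E; have := fnC x xX nx; rewrite E hC.
  + by apply: inj; rewrite VE ?nx ?ny.
- apply/setP => w; apply/imsetP/idP => [[x xX ->]|wY]; first exact: phiY.
  have [wC|nw] := boolP (w \in Cyc Y).
    move: wC; rewrite -him => /imsetP[x xC ->].
    by exists x; rewrite /phi ?xC // (subsetP sCX).
  have : w \in f @: cyc_vertices X by rewrite im VE' nw.
  case/imsetP => x; rewrite VE => /andP[nx xX] ->.
  by exists x; rewrite /phi // (negbTE nx).
- move=> a b aX bX.
  have RC : forall a b, a \in X -> b \in X -> a \in Cyc X -> Rc (phi a) (phi b) = Rc a b.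
    move=> a' b' a'X b'X a'C.
    have := hC a' a'C; rewrite CycE'; case/andP => _ /forall_inP H1.
    move: (a'C); rewrite CycE; case/andP => _ /forall_inP H2.
    have -> : phi a' = h a' by rewrite /phi a'C.
    by rewrite H1 ?H2 // -/(phi b') phiY.
  have [aC|na] := boolP (a \in Cyc X); first exact: RC.
  have [bC|nb] := boolP (b \in Cyc X); first by rewrite Rc_sym RC // Rc_sym.
  rewrite /phi (negbTE na) (negbTE nb).
  have [->|ab] := eqVneq a b; first by rewrite !Rc_refl.
  have aV : a \in cyc_vertices X by rewrite VE na aX.
  have bV : b \in cyc_vertices X by rewrite VE nb bX.
  move: (adj a b aV bV).
  by rewrite /cyc_adj aV bV (fV a aX na) (fV b bX nb) (inj_in_eq inj aV bV) ab /=.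
Qed.

End Conv.

Section Ord.
Variables (gT hT : finGroupType) (X : {group gT}) (Y : {group hT}).

Lemma ord_Riso phi : Riso X Y phi ->
  exists psi, Riso X Y psi /\ {in X, forall u, #[psi u] = #[u]}.
Proof.
move=> Hf.
have Hfib : forall c : ({set hT} * nat)%type,
    #|[set a in X | (Db Y (phi a), #[a]) == c]| = #|[set b in Y | (Db Y b, #[b]) == c]|.
  case=> S d.
  have [/exists_inP[x xX /eqP <-]|nS] := boolP [exists x in X, Db Y (phi x) == S].
    have -> : [set a in X | (Db Y (phi a), #[a]) == (Db Y (phi x), d)] =
              [set u in X | (Db X u == Db X x) && (#[u] == d)].
      apply/setP => a; rewrite !in_set xpair_eqE.
      by case aX: (a \in X) => //=; rewrite (Db_eq_im Hf aX xX).
    have -> : [set b in Y | (Db Y b, #[b]) == (Db Y (phi x), d)] =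
              [set u in Y | (Db Y u == Db Y (phi x)) && (#[u] == d)].
      by apply/setP => a; rewrite !in_set xpair_eqE.
    exact: (esym (cnt_im Hf d xX)).
  have -> : [set a in X | (Db Y (phi a), #[a]) == (S, d)] = set0.
    apply/setP => a; rewrite !in_set xpair_eqE; apply/negP => /and3P[aX eS _].
    by move/exists_inP: nS; apply; exists a.
  have -> : [set b in Y | (Db Y b, #[b]) == (S, d)] = set0.
    apply/setP => b; rewrite !in_set xpair_eqE; apply/negP => /and3P[bY eS _].
    move: bY; rewrite -(Riso_im Hf) => /imsetP[a aX eb].
    by move/exists_inP: nS; apply; exists a; rewrite -?eb.
  by rewrite !cards0.
have [psi [inj im col]] := match_fib 1 Hfib.
have psiY : forall x, x \in X -> psi x \in Y by move=> x xX; rewrite -im imset_f.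
have colD : forall x, x \in X -> Db Y (psi x) = Db Y (phi x).
  by move=> x xX; have := col x xX => -[].
have colO : forall x, x \in X -> #[psi x] = #[x].
  by move=> x xX; have := col x xX => -[].
exists psi; split => //; split => // a b aX bX.
rewrite (Rc_twin (psiY a aX) (Riso_in Hf aX) (colD a aX) (psiY b bX)).
rewrite Rc_sym (Rc_twin (psiY b bX) (Riso_in Hf bX) (colD b bX) (Riso_in Hf aX)).
by rewrite Rc_sym (Riso_Rc Hf).
Qed.

End Ord.

Definition Ep (T : finGroupType) (p : nat) (Z : {set T}) := [set x in Z | p.-elt x].

Lemma Ep_nil (T : finGroupType) (G : {group T}) p :
  nilpotent G -> Ep p G = 'O_p(G).
Proof.
move=> nilG; apply/setP => x; rewrite inE.
case xG: (x \in G); last by apply/esym/negbTE; apply: contraFN xG; apply: (subsetP (pcore_sub _ _)).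
by rewrite (mem_normal_Hall (nilpotent_pcore_Hall p nilG) (pcore_normal _ _)).
Qed.

Lemma card_Ep_nil (T : finGroupType) (G : {group T}) p :
  nilpotent G -> #|Ep p G| = ((#|G|`_p)%N)%N.
Proof. by move=> nilG; rewrite Ep_nil // (card_Hall (nilpotent_pcore_Hall p nilG)). Qed.

Lemma Syl_Ep (T : finGroupType) (G : {group T}) p (Q : {group T}) :
  Q \in 'Syl_p(G) -> #|Ep p G| = (#|G|`_p)%N -> gval Q = Ep p G.
Proof.
rewrite inE => sylQ cE; apply/eqP; rewrite eqEcard cE (card_Hall sylQ) leqnn andbT.
apply/subsetP => x xQ; rewrite inE (subsetP (pHall_sub sylQ) x xQ) /=.
exact: mem_p_elt (pHall_pgroup sylQ) xQ.
Qed.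

Lemma Ep_nilpotent (T : finGroupType) (G : {group T}) :
  (forall p, prime p -> #|Ep p G| = (#|G|`_p)%N) -> nilpotent G.
Proof.
move=> HE; apply: (nilpotentS _ (Fitting_nil G)).
apply/subsetP => x xG; rewrite -(prod_constt x); apply: group_prod => p _.
have [p_pr|np] := boolP (prime p); last by rewrite not_prime_constt // group1.
have [Q sylQ] := Sylow_exists p G.
have QE : gval Q = Ep p G by apply: Syl_Ep (HE p p_pr); rewrite inE.
have nQ : Q <| G.
  rewrite /normal (pHall_sub sylQ) /=; apply/subsetP => h hG; apply/normP.
  have sylQh : (Q :^ h)%G \in 'Syl_p(G) by rewrite inE pHallJ.
  by rewrite (Syl_Ep sylQh (HE p p_pr)) QE.
apply: (subsetP (Fitting_max nQ (pgroup_nil (pHall_pgroup sylQ)))).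
by rewrite QE inE constt_in // p_elt_constt.
Qed.

Section Fwd.
Variables (gT hT : finGroupType) (G : {group gT}) (H : {group hT}) (psi : gT -> hT).
Hypothesis Hpsi : Riso G H psi.
Hypothesis Hord : {in G, forall u, #[psi u] = #[u]}.

Lemma Ep_im p : psi @: Ep p G = Ep p H.
Proof.
apply/setP => w; apply/imsetP/idP.
  case=> x; rewrite inE => /andP[xG px] ->.
  by rewrite inE (Riso_in Hpsi xG) /p_elt Hord.
rewrite inE => /andP[]; rewrite -(Riso_im Hpsi) => /imsetP[x xG ->] px.
by exists x => //; rewrite inE xG /p_elt -Hord.
Qed.

Lemma card_Ep_im p : #|Ep p H| = #|Ep p G|.
Proof.
rewrite -Ep_im card_in_imset //; apply: sub_in2 (Riso_inj Hpsi).
by move=> x; rewrite inE => /andP[].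
Qed.

End Fwd.

Lemma fwd (gT hT : finGroupType) (G : {group gT}) (H : {group hT}) :
  nilpotent G -> #|G| = #|H| -> cyc_graph_iso G H ->
   (nilpotent H /\
    forall p : nat, prime p ->
      forall (P : {group gT}) (Q : {group hT}),
        P \in 'Syl_p(G) -> Q \in 'Syl_p(H) -> cyc_graph_iso P Q).
Proof.
move=> nilG eGH iso.
have [phi Hphi] := C_Riso iso eGH.
have [psi [Hpsi Hord]] := ord_Riso Hphi.
have cEH : forall p, #|Ep p H| = (#|H|`_p)%N.
  by move=> p; rewrite (card_Ep_im Hpsi Hord) card_Ep_nil // eGH.
split; first by apply: Ep_nilpotent => p _; apply: cEH.
move=> p p_pr P Q sylP sylQ.
have PE : gval P = Ep p G by apply: Syl_Ep sylP (card_Ep_nil _ nilG).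
have QE : gval Q = Ep p H by apply: Syl_Ep sylQ (cEH p).
have sPG : P \subset G by rewrite PE; apply/subsetP => x; rewrite inE => /andP[].
apply: (@Riso_C _ _ P Q psi); split.
- by move=> a b aP bP; apply: (Riso_inj Hpsi); apply: (subsetP sPG).
- by rewrite PE QE (Ep_im Hpsi Hord).
- move=> a b aP bP; apply: (Riso_Rc Hpsi); exact: (subsetP sPG).
Qed.

Section K.
Variable T : finGroupType.

Lemma constt_big (Z : {group T}) u q : u \in Z -> prime q -> #|Z| < q -> u.`_q = 1.
Proof.
move=> uZ q_pr lt; apply/constt1P; rewrite /p_elt p'natE //.
apply: contraL lt => /dvdn_trans/(_ (order_dvdG uZ)) /dvdn_leq.
by rewrite -leqNgt; apply; apply: cardG_gt0.
Qed.

Lemma prod_constt_ext (x : T) k : \prod_(0 <= p < (#[x].+1 + k)%N) x.`_p = x.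
Proof.
elim: k => [|k IH]; first by rewrite addn0 prod_constt.
rewrite addnS big_nat_recr //= IH.
have [p_pr|np] := boolP (prime (#[x].+1 + k)); last by rewrite not_prime_constt ?mulg1.
have -> : x.`_(#[x].+1 + k) = 1; last by rewrite mulg1.
apply/constt1P; rewrite /p_elt p'natE //.
apply/negP => /(dvdn_leq (order_gt0 x)); rewrite leqNgt.
by rewrite ltnS leq_addr.
Qed.

Lemma constt_inj (x y : T) : (forall q, prime q -> x.`_q = y.`_q) -> x = y.
Proof.
move=> Hq.
have ex : x = \prod_(0 <= p < (#[x].+1 + #[y])%N) x.`_p by rewrite prod_constt_ext.
have E : (#[x].+1 + #[y] = #[y].+1 + #[x])%N by rewrite !addSn addnC.
have ey : y = \prod_(0 <= p < (#[x].+1 + #[y])%N) y.`_p by rewrite E prod_constt_ext.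
rewrite [LHS]ex [RHS]ey; apply: eq_bigr => p _.
have [p_pr|np] := boolP (prime p); first exact: Hq.
by rewrite !not_prime_constt.
Qed.

Lemma prod_pcore (Z : {group T}) (e : nat -> T) n q :
  nilpotent Z -> (forall p, prime p -> e p \in 'O_p(Z)) -> prime q ->
  (\prod_(0 <= p < n | prime p) e p).`_q = if q < n then e q else 1.
Proof.
move=> nilZ He q_pr; rewrite big_mkcond /=.
have eZ : forall p, prime p -> e p \in Z by move=> p /He; apply: (subsetP (pcore_sub _ _)).
have pe : forall p, prime p -> p.-elt (e p) by move=> p /He; apply: mem_p_elt (pcore_pgroup _ _).
elim: n => [|n IH]; first by rewrite big_geq // constt1.
rewrite big_nat_recr //= consttM; last first.
  case: ifP => np; last exact: commute1.
  apply: commute_sym; apply: commute_prod => p _; case: ifP => pp; last first.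
    exact: commute1.
  have [<-|pn] := eqVneq p n; first exact: commute_refl.
  apply: (nil_comm (p := n) nilZ); rewrite ?eZ ?pe //.
  by apply: sub_in_pnat (pe p pp) => r _; rewrite !inE => /eqP ->.
rewrite IH ltnS.
have [qn'|qn] := eqVneq q n.
  by rewrite -qn' ltnn leqnn q_pr constt_p_elt ?pe // mul1g.
rewrite [q <= n]leq_eqVlt (negbTE qn) /=.
have [np|np] := boolP (prime n); last by rewrite /= constt1 mulg1.
have -> : (e n).`_q = 1; last by rewrite mulg1.
apply/constt1P; apply: sub_in_pnat (pe n np) => r _; rewrite !inE => /eqP ->; by rewrite eq_sym.
Qed.

End K.

Lemma bwd (gT hT : finGroupType) (G : {group gT}) (H : {group hT}) :
  nilpotent G -> #|G| = #|H| -> nilpotent H ->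
    (forall p : nat, prime p ->
      forall (P : {group gT}) (Q : {group hT}),
        P \in 'Syl_p(G) -> Q \in 'Syl_p(H) -> cyc_graph_iso P Q) ->
  cyc_graph_iso G H.
Proof.
move=> nilG eGH nilH Hsyl.
have Hex : forall p : nat, exists f : gT -> hT, prime p -> Riso 'O_p(G) 'O_p(H) f.
  move=> p; have [p_pr|np] := boolP (prime p); last by exists (fun _ => 1).
  have sylP : 'O_p(G)%G \in 'Syl_p(G) by rewrite inE (nilpotent_pcore_Hall p nilG).
  have sylQ : 'O_p(H)%G \in 'Syl_p(H) by rewrite inE (nilpotent_pcore_Hall p nilH).
  have cPQ : #|'O_p(G)| = #|'O_p(H)|.
    by rewrite (card_Hall (nilpotent_pcore_Hall p nilG)) (card_Hall (nilpotent_pcore_Hall p nilH)) eGH.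
  have [f Hf] := C_Riso (Hsyl p p_pr _ _ sylP sylQ) cPQ.
  by exists f.
pose ps p := proj1_sig (constructive_indefinite_description _ (Hex p)).
have Hps : forall p, prime p -> Riso 'O_p(G) 'O_p(H) (ps p).
  by move=> p; rewrite /ps; case: constructive_indefinite_description.
pose N := #|G|.+1.
pose Psi x := \prod_(0 <= p < N | prime p) ps p x.`_p.
have xO : forall x p, x \in G -> prime p -> x.`_p \in 'O_p(G).
  by move=> x p xG p_pr; rewrite -Ep_nil // inE constt_in // p_elt_constt.
have eO : forall x p, x \in G -> prime p -> ps p x.`_p \in 'O_p(H).
  by move=> x p xG p_pr; apply: (Riso_in (Hps p p_pr)); apply: xO.
have PsiH : forall x, x \in G -> Psi x \in H.
  move=> x xG; apply: group_prod => p p_pr.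
  exact: (subsetP (pcore_sub p H)) (eO x p xG p_pr).
have Psiq : forall x q, x \in G -> prime q ->
    (Psi x).`_q = if q < N then ps q x.`_q else 1.
  move=> x q xG q_pr; rewrite /Psi (prod_pcore (Z := H) (e := fun p => ps p x.`_p)) //.
  by move=> p; apply: eO.
have big1 : forall x q, x \in G -> prime q -> ~~ (q < N) -> x.`_q = 1.
  by move=> x q xG q_pr; rewrite -leqNgt => qN; apply: (constt_big xG).
have big1' : forall w q, w \in H -> prime q -> ~~ (q < N) -> w.`_q = 1.
  by move=> w q wH q_pr; rewrite -leqNgt /N eGH => qN; apply: (constt_big wH).
have inj : {in G &, injective Psi}.
  move=> x y xG yG E; apply: constt_inj => q q_pr.
  have := Psiq x q xG q_pr; have := Psiq y q yG q_pr; rewrite E => ->.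
  case: ifP => qN; last by rewrite !big1 ?qN.
  by move/esym; apply: (Riso_inj (Hps q q_pr)); apply: xO.
apply: (@Riso_C _ _ G H Psi); split => //.
  apply/eqP; rewrite eqEcard card_in_imset // -eGH leqnn andbT.
  by apply/subsetP => w /imsetP[x xG ->]; apply: PsiH.
move=> x y xG yG; apply/idP/idP.
  move=> Rxy; have Hq := proj1 (Rc_nil nilH (PsiH x xG) (PsiH y yG)) Rxy.
  apply: (proj2 (Rc_nil nilG xG yG)) => q q_pr.
  have := Hq q q_pr; rewrite !Psiq //; case: ifP => qN.
    by rewrite (Riso_Rc (Hps q q_pr)) ?xO.
  by rewrite (big1 x q xG q_pr (negbT qN)) => _; apply: Rc_1.
move=> Rxy; have Hq := proj1 (Rc_nil nilG xG yG) Rxy.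
apply: (proj2 (Rc_nil nilH (PsiH x xG) (PsiH y yG))) => q q_pr.
rewrite !Psiq //; case: ifP => qN; last exact: Rc_refl.
by rewrite (Riso_Rc (Hps q q_pr)) ?xO //; apply: Hq.
Qed.


Theorem theorem4 (gT hT : finGroupType) (G : {group gT}) (H : {group hT}) :
  nilpotent G -> #|G| = #|H| ->
  (cyc_graph_iso G H <->
   (nilpotent H /\
    forall p : nat, prime p ->
      forall (P : {group gT}) (Q : {group hT}),
        P \in 'Syl_p(G) -> Q \in 'Syl_p(H) -> cyc_graph_iso P Q)).
Proof.
move=> nilG eGH; split; first exact: fwd.
by case=> nilH Hsyl; apply: bwd.
Qed.
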